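(* Let $\gamma\in\mathbb{R}$ with $\sin\gamma\neq0$, $q=e^{\mathrm{i}\gamma}$, $[x]_q=\sin(\gamma x)/\sin\gamma$, and $\varphi\in\mathbb{C}$ with $\sin\varphi\neq0$. For $s\in\mathbb{C}$, on the space $\mathfrak{S}_s$ with orthonormal basis $\{|k\rangle:k\in\mathbb{Z}_{\ge0}\}$ let $\mathbf{s}^z_s=\sum_{k\ge0}(s-k)|k\rangle\langle k|$, $\mathbf{s}^+_s=\sum_{k\ge0}[k+1]_q|k\rangle\langle k+1|$, $\mathbf{s}^-_s=\sum_{k\ge0}[2s-k]_q|k+1\rangle\langle k|$, and define the Lax operator $\mathbf{L}(\varphi,s)=\sum_{i,j=1}^2 e^{ij}\otimes\mathbf{L}_{ij}(\varphi,s)$ with $$\begin{pmatrix}\mathbf{L}_{11}&\mathbf{L}_{12}\\ \mathbf{L}_{21}&\mathbf{L}_{22}\end{pmatrix}=\begin{pmatrix}\sin(\varphi+\gamma\mathbf{s}^z_s)&(\sin\gamma)\mathbf{s}^-_s\\ (\sin\gamma)\mathbf{s}^+_s&\sin(\varphi-\gamma\mathbf{s}^z_s)\end{pmatrix},$$ and the operator on $(\mathbb{C}^2)^{\otimes n}$ $$W_n(\varphi,s)=\sum_{i_1,j_1,\dots,i_n,j_n}\langle0|\mathbf{L}_{i_1j_1}(\varphi,s)\cdots\mathbf{L}_{i_nj_n}(\varphi,s)|0\rangle\,e^{i_1j_1}\otimes\cdots\otimes e^{i_nj_n}.$$ Next let $\widetilde{\mathfrak{S}}$ be the space with orthonormal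 basis $\{|\mathrm{L}\rangle,|\mathrm{R}\rangle,|1\rangle,|2\rangle,\dots\}$, let $\tilde{\mathbf{s}}^z=\sum_{k\ge1}(-k)|k\rangle\langle k|$, $\tilde{\mathbf{s}}^+=\sum_{k\ge1}[k+1]_q|k\rangle\langle k+1|$, $\tilde{\mathbf{s}}^-=\sum_{k\ge1}[-k]_q|k+1\rangle\langle k|$ (all vanishing on $|\mathrm{L}\rangle,|\mathrm{R}\rangle$, and with $\cos(\gamma\tilde{\mathbf{s}}^z)$, $\sin(\gamma\tilde{\mathbf{s}}^z)$ acting on $|k\rangle$, $k\ge1$, by $\cos(\gamma k)$, $-\sin(\gamma k)$ and vanishing on $|\mathrm{L}\rangle,|\mathrm{R}\rangle$), and set \begin{align*} \widetilde{\mathbf{L}}^0(\varphi)&=|\mathrm{L}\rangle\langle\mathrm{L}|+|\mathrm{R}\rangle\langle\mathrm{R}|+\cos(\gamma\tilde{\mathbf{s}}^z),& \widetilde{\mathbf{L}}^z(\varphi)&=\cot\varphi\,\sin(\gamma\tilde{\mathbf{s}}^z),\\ \widetilde{\mathbf{L}}^+(\varphi)&=|1\rangle\langle\mathrm{R}|+\tfrac{\sin\gamma}{\sin\varphi}\tilde{\mathbf{s}}^-,& \widetilde{\mathbf{L}}^-(\varphi)&=|\mathrm{L}\rangle\langle1|+\tfrac{\sin\gamma}{\sin\varphi}\tilde{\mathbf{s}}^+, \end{align*} and $Z_n(\varphi)=\sum_{\alpha_1,\dots,\alpha_n\in\{0,+,-,z\}}\langle\mathrm{L}|\widetilde{\mathbf{L}}^{\alpha_1}(\varphi)\cdots\widetilde{\mathbf{L}}^{\alpha_n}(\varphi)|\mathrm{R}\rangle\,\sigma^{\alpha_1}\otimes\cdots\otimes\sigma^{\alpha_n}$.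 Then $$\frac{1}{(\sin\varphi)^n}\,\partial_s W_n(\varphi,s)\Big|_{s=0}=\frac{2\gamma\sin\gamma}{(\sin\varphi)^2}Z_n(\varphi)+\gamma\cot\varphi\,M_n,$$ where $M_n=\sum_{x=1}^n\mathbb{1}_{2^{x-1}}\otimes\sigma^z\otimes\mathbb{1}_{2^{n-x}}$.
   Context: $e^{ij}=|i\rangle\langle j|$ are $2\times2$ matrix units; $\sigma^0=\mathbb{1}_2$, $\sigma^+=e^{12}$, $\sigma^-=e^{21}$, $\sigma^z=e^{11}-e^{22}$. Functions of the diagonal operator $\mathbf{s}^z_s$ (such as $\sin(\varphi\pm\gamma\mathbf{s}^z_s)$) act diagonally on the basis $|k\rangle$. $n\ge1$. *)

(* Defs.v *)
From Stdlib Require Import Reals List.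
From Coquelicot Require Import Coquelicot.
Import ListNotations.
Open Scope C_scope.

Definition Cexp (z : C) : C :=
  (exp (fst z) * cos (snd z), exp (fst z) * sin (snd z))%R.
Definition Csin (z : C) : C := (Cexp (Ci * z) - Cexp (- (Ci * z))) / (2 * Ci).
Definition Ccos (z : C) : C := (Cexp (Ci * z) + Cexp (- (Ci * z))) / 2.
Definition Ccot (z : C) : C := Ccos z / Csin z.

Fixpoint Csum (m : nat) (f : nat -> C) : C :=
  match m with O => 0 | S k => Csum k f + f k end.
Fixpoint Cprod (m : nat) (f : nat -> C) : C :=
  match m with O => 1 | S k => Cprod k f * f k end.

Definition qnum (gamma : R) (x : C) : C := Csin (RtoC gamma * x) / Csin (RtoC gamma).

Inductive i2 := one | two.
Definition i2_eqb (a b : i2) : bool :=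
  match a, b with one, one | two, two => true | _, _ => false end.

Inductive alpha := a0 | ap | am | az.
Definition sigma (a : alpha) (i j : i2) : C :=
  match a, i, j with
  | a0, one, one | a0, two, two => 1
  | ap, one, two => 1
  | am, two, one => 1
  | az, one, one => 1
  | az, two, two => -1
  | _, _, _ => 0
  end.

(* ---------- the module S_s : vectors are coefficient sequences k |-> <k|v> ---------- *)
Definition svec := nat -> C.
Definition e0 : svec := fun k => match k with O => 1 | _ => 0 end.

(* Lax operator entries L_ij(phi,s) acting on S_s, read off from
   s^z = sum (s-k)|k><k|, s^+ = sum [k+1]_q |k><k+1|, s^- = sum [2s-k]_q |k+1><k| *)
Definition Lop (gamma : R) (phi s : C) (i j : i2) (v : svec) : svec :=
  fun k =>
  match i, j with
  | one, one => Csin (phi + RtoC gamma * (s - INR k)) * v k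
  | one, two =>
      match k with
      | O => 0
      | S k' => Csin (RtoC gamma) * qnum gamma (2 * s - INR k') * v k'
      end
  | two, one =>
      Csin (RtoC gamma) * qnum gamma (INR k + 1) * v (S k)
  | two, two => Csin (phi - RtoC gamma * (s - INR k)) * v k
  end.

(* A_0 (A_1 ( ... (A_{m-1} v))) *)
Fixpoint chain {V : Type} (m : nat) (A : nat -> V -> V) (v : V) : V :=
  match m with O => v | S k => chain k A (A k v) end.

(* matrix entry of W_n(phi,s) at row index (I 0,...,I (n-1)), column (J 0,...,J (n-1)):
   <0| L_{I0 J0} ... L_{I(n-1) J(n-1)} |0> *)
Definition Wn (gamma : R) (n : nat) (phi s : C) (I J : nat -> i2) : C :=
  chain n (fun x => Lop gamma phi s (I x) (J x)) e0 O.

(* tK m stands for the basis vector |m+1> *)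
Inductive tidx := tL | tR | tK (m : nat).
Definition tvec := tidx -> C.
Definition eR : tvec := fun t => match t with tR => 1 | _ => 0 end.

(* tilde L^alpha(phi), written out from the definitions:
   s~^z|k> = -k|k>, s~^+ |k+1> = [k+1]_q |k>, s~^- |k> = [-k]_q |k+1>  (k>=1),
   cos(gamma s~^z)|k> = cos(gamma k)|k>, sin(gamma s~^z)|k> = -sin(gamma k)|k>,
   all vanishing on |L>, |R>. *)
Definition Ltop (gamma : R) (phi : C) (a : alpha) (v : tvec) : tvec :=
  fun t =>
  match a, t with
  | a0, tL => v tL
  | a0, tR => v tR
  | a0, tK m => Ccos (RtoC gamma * INR (S m)) * v (tK m)
  | az, tK m => Ccot phi * (- Csin (RtoC gamma * INR (S m))) * v (tK m)
  | az, _ => 0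
  | ap, tK O => v tR
  | ap, tK (S m) =>
      Csin (RtoC gamma) / Csin phi * qnum gamma (- INR (S m)) * v (tK m)
  | ap, _ => 0
  | am, tL => v (tK O)
  | am, tK m =>
      Csin (RtoC gamma) / Csin phi * qnum gamma (INR (S (S m))) * v (tK (S m))
  | am, tR => 0
  end.

Fixpoint tchain (gamma : R) (phi : C) (w : list alpha) (v : tvec) : tvec :=
  match w with
  | [] => v
  | a :: w' => Ltop gamma phi a (tchain gamma phi w' v)
  end.

Fixpoint sum_words (m : nat) (F : list alpha -> C) : C :=
  match m with
  | O => F []
  | S k => sum_words k (fun w => F (a0 :: w)) + sum_words k (fun w => F (ap :: w))
         + sum_words k (fun w => F (am :: w)) + sum_words k (fun w => F (az :: w))
  end.

Definition Zn (gamma : R) (n : nat) (phi : C) (I J : nat -> i2) : C :=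
  sum_words n (fun w =>
    tchain gamma phi w eR tL * Cprod n (fun x => sigma (nth x w a0) (I x) (J x))).

Definition Mn (n : nat) (I J : nat -> i2) : C :=
  Csum n (fun x => Cprod n (fun y =>
    if Nat.eqb y x then sigma az (I y) (J y) else sigma a0 (I y) (J y))).

(* Main.v *)
Require Import Defs.
From Stdlib Require Import Reals List Lra Psatz.
From Coquelicot Require Import Coquelicot.
Open Scope C_scope.
Section RealPart.
Local Open Scope R_scope.

Lemma PI_gt_half : 1/2 < PI / 2.
Proof. generalize PI2_1; lra. Qed.

Lemma sin_bnd_pos b : 0 <= b <= 1/2 -> b - b*b*b/6 <= sin b <= b.
Proof.
  intros H. assert (HP := PI_gt_half).
  destruct (sin_bound b 0) as [H1 H2]; try lra.
  unfold sin_approx, sum_f_R0, sin_term in *; simpl in *.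
  assert (E1: b * (b * (b * 1)) = b*b*b) by ring.
  assert (E2: b * (b * (b * (b * (b * 1)))) = b*b*b*(b*b)) by ring.
  rewrite E1, E2 in *. assert (Hc: 0 <= b*b*b) by (apply Rmult_le_pos; nra).
  assert (Hd: b*b*b*(b*b) <= b*b*b*1) by (apply Rmult_le_compat_l; nra).
  split; lra.
Qed.

Lemma sin_bnd b : Rabs b <= 1/2 -> Rabs (sin b) <= Rabs b /\ Rabs (sin b - b) <= b * b.
Proof.
  intros H. destruct (Rle_dec 0 b).
  - rewrite Rabs_pos_eq in H by lra.
    destruct (sin_bnd_pos b) as [H1 H2]; [lra|].
    assert (Hs: 0 <= sin b) by nra.
    rewrite (Rabs_pos_eq b), (Rabs_pos_eq (sin b)) by lra. split; [lra|].
    rewrite Rabs_left1 by lra. nra.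
  - rewrite Rabs_left in H by lra.
    destruct (sin_bnd_pos (-b)) as [H1 H2]; [lra|]. rewrite sin_neg in H1, H2.
    rewrite (Rabs_left b) by lra. split.
    + rewrite Rabs_left1 by nra. lra.
    + rewrite Rabs_pos_eq by nra. nra.
Qed.

Lemma cos_bnd b : Rabs b <= 1/2 -> Rabs (cos b - 1) <= b * b / 2.
Proof.
  intros H. assert (HP := PI_gt_half).
  assert (Hb: -1/2 <= b <= 1/2) by (apply Rabs_le_between in H; lra).
  destruct (cos_bound b 0) as [H1 H2]; try lra.
  unfold cos_approx, sum_f_R0, cos_term in *; simpl in *.
  assert (E1: b * (b * 1) = b*b) by ring.
  assert (E2: b * (b * (b * (b * 1))) = b*b*(b*b)) by ring.
  rewrite E1, E2 in *. assert (Hc: 0 <= b*b) by nra.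
  assert (Hd: b*b*(b*b) <= b*b*1) by (apply Rmult_le_compat_l; nra).
  rewrite Rabs_left1 by lra. lra.
Qed.

Lemma exp_bnd a : Rabs a <= 1/2 -> 0 <= exp a - 1 - a <= 2 * (a * a).
Proof.
  intros H. assert (Hb: -1/2 <= a <= 1/2) by (apply Rabs_le_between in H; lra).
  assert (H1 := exp_ineq1_le a). assert (H2 := exp_ineq1_le (-a)).
  assert (H3 : exp a * exp (-a) = 1) by (rewrite <- exp_plus; replace (a + - a) with 0 by ring; apply exp_0).
  assert (H4 := exp_pos a). assert (H5 := exp_pos (-a)).
  split. lra. nra.
Qed.

End RealPart.
Open Scope C_scope.

Lemma Cexp_add a b : Cexp (a + b) = Cexp a * Cexp b.
Proof.
  destruct a as [a1 a2], b as [b1 b2]. unfold Cexp. simpl.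
  rewrite exp_plus, cos_plus, sin_plus.
  unfold Cmult; simpl. f_equal; ring.
Qed.

Lemma Cexp_0 : Cexp 0 = 1.
Proof. unfold Cexp. simpl. rewrite exp_0, cos_0, sin_0. unfold RtoC. f_equal; ring. Qed.

Lemma Cmod_le_abs (x y : R) : (Cmod (x, y) <= Rabs x + Rabs y)%R.
Proof.
  unfold Cmod. simpl.
  rewrite <- (sqrt_square (Rabs x + Rabs y)) by (generalize (Rabs_pos x) (Rabs_pos y); lra).
  apply sqrt_le_1_alt.
  assert (x * x = Rabs x * Rabs x)%R by (rewrite <- Rabs_mult, Rabs_pos_eq; nra).
  assert (y * y = Rabs y * Rabs y)%R by (rewrite <- Rabs_mult, Rabs_pos_eq; nra).
  generalize (Rabs_pos x) (Rabs_pos y). nra.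
Qed.

Lemma Cmod_sq (x y : R) : (Cmod (x, y) * Cmod (x, y) = x * x + y * y)%R.
Proof. unfold Cmod. simpl. rewrite sqrt_sqrt; nra. Qed.

Lemma Cexp_small h : (Cmod h <= 1/2)%R -> (Cmod (Cexp h - 1 - h) <= 4 * (Cmod h * Cmod h))%R.
Proof.
  destruct h as [a b]. intros H.
  assert (Ha : (Rabs a <= 1/2)%R).
  { eapply Rle_trans; [|exact H]. apply (re_le_Cmod (a,b)). }
  assert (Hb : (Rabs b <= 1/2)%R).
  { eapply Rle_trans; [|exact H]. unfold Cmod; simpl. rewrite <- sqrt_Rsqr_abs. apply sqrt_le_1_alt. unfold Rsqr; nra. }
  rewrite Cmod_sq.
  assert (E : Cexp (a, b) - 1 - (a, b) = ((exp a * cos b - 1 - a)%R, (exp a * sin b - b)%R)).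
  { unfold Cexp, Cminus, Cplus, Copp. simpl. f_equal; ring. }
  rewrite E. eapply Rle_trans; [apply Cmod_le_abs|].
  destruct (exp_bnd a Ha) as [E1 E2]. destruct (sin_bnd b Hb) as [S1 S2].
  assert (C1 := cos_bnd b Hb).
  assert (HA : (Rabs a * Rabs a = a * a)%R) by (rewrite <- Rabs_mult; apply Rabs_pos_eq; nra).
  assert (HB : (Rabs b * Rabs b = b * b)%R) by (rewrite <- Rabs_mult; apply Rabs_pos_eq; nra).
  assert (Hab : (2 * Rabs a * Rabs b <= a * a + b * b)%R) by (assert (0 <= (Rabs a - Rabs b)*(Rabs a - Rabs b))%R by apply Rle_0_sqr; nra).
  assert (R1 : (Rabs (exp a * cos b - 1 - a) <= b * b + 2 * (a * a))%R).
  { replace (exp a * cos b - 1 - a)%R with (exp a * (cos b - 1) + (exp a - 1 - a))%R by ring.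
    eapply Rle_trans; [apply Rabs_triang|]. rewrite Rabs_mult.
    rewrite (Rabs_pos_eq (exp a)) by (apply Rlt_le, exp_pos).
    rewrite (Rabs_pos_eq (exp a - 1 - a)) by lra.
    assert (Hex : (exp a <= 2)%R).
    { apply Rabs_le_between in Ha. nra. }
    assert (0 <= Rabs (cos b - 1))%R by apply Rabs_pos.
    assert (Hexp := exp_pos a). nra. }
  assert (R2 : (Rabs (exp a * sin b - b) <= a * a + b * b + b * b)%R).
  { replace (exp a * sin b - b)%R with ((exp a - 1) * sin b + (sin b - b))%R by ring.
    eapply Rle_trans; [apply Rabs_triang|]. rewrite Rabs_mult.
    assert (Hx : (Rabs (exp a - 1) <= 2 * Rabs a)%R).
    { apply Rabs_le_between in Ha. apply Rabs_le. destruct (Rle_dec 0 a).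
      rewrite Rabs_pos_eq by lra. nra. rewrite Rabs_left by lra. nra. }
    assert (0 <= Rabs (sin b))%R by apply Rabs_pos.
    assert (0 <= Rabs (exp a - 1))%R by apply Rabs_pos.
    nra. }
  nra.
Qed.

Lemma Cplus_minus_cancel (y z : C) : y = z + (y - z).
Proof. ring. Qed.

Lemma is_derive_Cexp z : is_derive (K := C_AbsRing) (V := C_NormedModule) Cexp z (Cexp z).
Proof.
  split; [apply is_linear_scal_l|].
  intros x Hx. apply (is_filter_lim_locally_unique (K:=C_AbsRing) (V:=AbsRing_NormedModule C_AbsRing)) in Hx. subst x.
  intros eps.
  set (M := (Cmod (Cexp z) + 1)%R).
  assert (HM : (0 < M)%R) by (unfold M; generalize (Cmod_ge_0 (Cexp z)); lra).
  assert (Hd : (0 < Rmin (1/2) (eps / (4 * M)))%R).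
  { apply Rmin_pos. lra. apply Rdiv_lt_0_compat. apply eps. lra. }
  exists (mkposreal _ Hd). intros y Hy. change (Cmod (y - z) < Rmin (1/2) (eps / (4 * M)))%R in Hy.
  change (norm (minus y z)) with (Cmod (y - z)).
  change (norm (minus (minus (Cexp y) (Cexp z)) (scal (minus y z) (Cexp z))))
    with (Cmod ((Cexp y - Cexp z) - (y - z) * Cexp z)).
  assert (Ey := Cplus_minus_cancel y z).
  set (h := y - z) in *. rewrite Ey, Cexp_add.
  replace (Cexp z * Cexp h - Cexp z - h * Cexp z) with (Cexp z * (Cexp h - 1 - h)) by ring.
  rewrite Cmod_mult.
  assert (H1 : (Cmod h <= 1/2)%R) by (generalize (Rmin_l (1/2) (eps/(4*M))); lra).
  assert (H2 : (Cmod h <= eps / (4 * M))%R) by (generalize (Rmin_r (1/2) (eps/(4*M))); lra).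
  assert (H3 := Cexp_small h H1).
  assert (H4 : (0 <= Cmod h)%R) by apply Cmod_ge_0.
  assert (H5 : (0 <= Cmod (Cexp z))%R) by apply Cmod_ge_0.
  assert (H6 : (4 * M * Cmod h <= eps)%R).
  { apply (Rmult_le_compat_l (4 * M)) in H2; [|lra].
    replace (4 * M * (eps / (4 * M)))%R with (pos eps) in H2 by (field; lra). lra. }
  assert (H7 : (Cmod (Cexp h - 1 - h) <= 4 * Cmod h * Cmod h)%R) by lra.
  assert (H8 : (0 <= Cmod (Cexp h - 1 - h))%R) by apply Cmod_ge_0.
  unfold M in H6.
  apply Rle_trans with (Cmod (Cexp z) * (4 * Cmod h * Cmod h))%R.
  apply Rmult_le_compat_l; auto. nra.
Qed.

Open Scope C_scope.

Notation isd := (is_derive (K := C_AbsRing) (V := C_NormedModule)).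

Lemma isd_t1 (f : C -> C) x l : @is_derive C_AbsRing (AbsRing_NormedModule C_AbsRing) f x l -> @is_derive C_AbsRing C_NormedModule f x l.
Proof. intros [H1 H2]. split.
- destruct H1 as [L1 L2 L3]. split. exact L1. exact L2. destruct L3 as [M HM]. exists M. exact HM.
- intros y Hy eps. exact (H2 y Hy eps).
Qed.
Lemma isd_t2 (f : C -> C) x l : @is_derive C_AbsRing C_NormedModule f x l -> @is_derive C_AbsRing (AbsRing_NormedModule C_AbsRing) f x l.
Proof. intros [H1 H2]. split.
- destruct H1 as [L1 L2 L3]. split. exact L1. exact L2. destruct L3 as [M HM]. exists M. exact HM.
- intros y Hy eps. exact (H2 y Hy eps).
Qed.

Lemma isd_eq f x (l l' : C) : isd f x l' -> l' = l -> isd f x l.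
Proof. intros H ->; exact H. Qed.

Lemma isd_ext f g x l : (forall t, f t = g t) -> isd f x l -> isd g x l.
Proof. intros H H'. exact (is_derive_ext f g x l H H'). Qed.

Lemma isd_const (a : C) x : isd (fun _ => a) x (RtoC 0).
Proof. apply (is_derive_const (K:=C_AbsRing) (V:=C_NormedModule)). Qed.

Lemma isd_id x : isd (fun t => t) x (RtoC 1).
Proof. apply isd_t1. exact (is_derive_id (K:=C_AbsRing) x). Qed.

Lemma isd_mult f g x df dg : isd f x df -> isd g x dg ->
  isd (fun t => f t * g t) x (df * g x + f x * dg).
Proof.
  intros H1 H2. apply isd_t1. apply (is_derive_mult (K:=C_AbsRing) f g x df dg (isd_t2 _ _ _ H1) (isd_t2 _ _ _ H2)).
  intros; apply Cmult_comm.
Qed.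

Lemma isd_plus f g x df dg : isd f x df -> isd g x dg ->
  isd (fun t => f t + g t) x (df + dg).
Proof. intros H1 H2. apply (is_derive_plus (K:=C_AbsRing) (V:=C_NormedModule) f g x df dg H1 H2). Qed.

Lemma isd_comp f g x df dg : isd f (g x) df -> isd g x dg ->
  isd (fun t => f (g t)) x (dg * df).
Proof. intros H1 H2. apply (is_derive_comp (K:=C_AbsRing) (V:=C_NormedModule) f g x df dg H1 (isd_t2 _ _ _ H2)). Qed.

Lemma isd_lin a b x : isd (fun s => a * s + b) x a.
Proof.
  eapply isd_eq. apply isd_plus. apply isd_mult. apply isd_const. apply isd_id. apply isd_const.
  cbv beta; ring.
Qed.

Lemma isd_Cexp_lin a b x : isd (fun s => Cexp (a * s + b)) x (a * Cexp (a * x + b)).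
Proof.
  apply (isd_comp Cexp (fun s => a * s + b)). apply is_derive_Cexp. apply isd_lin.
Qed.

Lemma isd_minus f g x df dg : isd f x df -> isd g x dg ->
  isd (fun t => f t - g t) x (df - dg).
Proof. intros H1 H2. apply (is_derive_minus (K:=C_AbsRing) (V:=C_NormedModule) f g x df dg H1 H2). Qed.

Lemma Ci_neq0 : Ci <> 0.
Proof. intros H. injection H. lra. Qed.

Lemma isd_Csin_lin a b x : isd (fun s => Csin (a * s + b)) x (a * Ccos (a * x + b)).
Proof.
  unfold Csin, Ccos.
  eapply isd_eq.
  - apply isd_mult; [|apply isd_const].
    apply isd_minus.
    + apply isd_ext with (fun s => Cexp ((Ci * a) * s + Ci * b)). intros; f_equal; ring.
      apply isd_Cexp_lin.
    + apply isd_ext with (fun s => Cexp ((- (Ci * a)) * s + - (Ci * b))). intros; f_equal; ring.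
      apply isd_Cexp_lin.
  - cbv beta.
    replace (- (Ci * (a * x + b))) with (- (Ci * a) * x + - (Ci * b)) by ring.
    replace (Ci * (a * x + b)) with (Ci * a * x + Ci * b) by ring.
    field. apply Ci_neq0.
Qed.

Lemma Csin_add x y : Csin (x + y) = Csin x * Ccos y + Ccos x * Csin y.
Proof.
  unfold Csin, Ccos.
  replace (Ci * (x + y)) with (Ci * x + Ci * y) by ring.
  replace (- (Ci * x + Ci * y)) with (- (Ci * x) + - (Ci * y)) by ring.
  rewrite !Cexp_add. field. apply Ci_neq0.
Qed.

Lemma Csin_opp x : Csin (- x) = - Csin x.
Proof.
  unfold Csin. replace (Ci * - x) with (- (Ci * x)) by ring.
  replace (- - (Ci * x)) with (Ci * x) by ring. field. apply Ci_neq0.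
Qed.

Lemma Ccos_opp x : Ccos (- x) = Ccos x.
Proof.
  unfold Ccos. replace (Ci * - x) with (- (Ci * x)) by ring.
  replace (- - (Ci * x)) with (Ci * x) by ring. field.
Qed.

Lemma Csin_0 : Csin 0 = 0.
Proof. unfold Csin. replace (Ci * 0) with (RtoC 0) by ring. replace (- RtoC 0) with (RtoC 0) by ring.
  rewrite Cexp_0. field. apply Ci_neq0. Qed.

Lemma Ccos_0 : Ccos 0 = 1.
Proof. unfold Ccos. replace (Ci * 0) with (RtoC 0) by ring. replace (- RtoC 0) with (RtoC 0) by ring.
  rewrite Cexp_0. field. Qed.

Lemma Csin_sub_form p x : Csin p * Ccos x - Ccos p * Csin x = Csin (p - x).
Proof. unfold Cminus at 2. rewrite Csin_add, Csin_opp, Ccos_opp. ring. Qed.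

Lemma Csin_add_form p x : Csin p * Ccos x + Ccos p * Csin x = Csin (p + x).
Proof. rewrite Csin_add. ring. Qed.

Open Scope C_scope.

Section S.
Variable gamma : R.
Variable phi : C.
Local Notation g := (RtoC gamma).

Definition Lder (i j : i2) (v dv : svec) : svec := fun k =>
  match i, j with
  | Defs.one, Defs.one => g * Ccos (phi + g * (0 - INR k)) * v k + Csin (phi + g * (0 - INR k)) * dv k
  | Defs.one, two => match k with O => 0
      | S k' => Csin g * (2 * g * Ccos (g * (2 * 0 - INR k')) / Csin g) * v k'
                + Csin g * qnum gamma (2 * 0 - INR k') * dv k' end
  | two, Defs.one => Csin g * qnum gamma (INR k + 1) * dv (S k)
  | two, two => - g * Ccos (phi - g * (0 - INR k)) * v k + Csin (phi - g * (0 - INR k)) * dv k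
  end.

Lemma isd_Lop i j (V : C -> svec) (dV : svec) :
  (forall k, isd (fun s => V s k) (RtoC 0) (dV k)) ->
  forall k, isd (fun s => Lop gamma phi s i j (V s) k) (RtoC 0) (Lder i j (V (RtoC 0)) dV k).
Proof.
  intros HV k. unfold Lop, Lder. destruct i, j.
  - eapply isd_eq. apply isd_mult; [|apply HV].
    apply isd_ext with (fun s => Csin (g * s + (phi - g * INR k))). intros; apply f_equal; ring.
    apply isd_Csin_lin. cbv beta.
    replace (g * 0 + (phi - g * INR k)) with (phi + g * (0 - INR k)) by ring. reflexivity.
  - destruct k as [|k'].
    + apply isd_const.
    + eapply isd_eq. apply isd_mult; [|apply HV]. apply isd_mult; [apply isd_const|].
      unfold qnum. apply isd_mult; [|apply isd_const].
      apply isd_ext with (fun s => Csin ((g * 2) * s + (- g * INR k'))). intros; apply f_equal; ring.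
      apply isd_Csin_lin. cbv beta.
      replace (g * 2 * 0 + - g * INR k') with (g * (2 * 0 - INR k')) by ring. unfold Cdiv; ring.
  - eapply isd_eq. apply isd_mult; [apply isd_const|apply HV]. cbv beta. ring.
  - eapply isd_eq. apply isd_mult; [|apply HV].
    apply isd_ext with (fun s => Csin ((- g) * s + (phi + g * INR k))). intros; apply f_equal; ring.
    apply isd_Csin_lin. cbv beta.
    replace (- g * 0 + (phi + g * INR k)) with (phi - g * (0 - INR k)) by ring. reflexivity.
Qed.
End S.

Open Scope C_scope.

Section S.
Variable gamma : R.
Variable phi : C.
Local Notation g := (RtoC gamma).
Local Notation sp := (Csin phi).
Local Notation sg := (Csin (RtoC gamma)).

Definition LtS (i j : i2) (T : tvec) : tvec := fun t =>
  Defs.sigma a0 i j * Ltop gamma phi a0 T t + Defs.sigma ap i j * Ltop gamma phi ap T t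
  + Defs.sigma am i j * Ltop gamma phi am T t + Defs.sigma az i j * Ltop gamma phi az T t.

Definition tmstep (i j : i2) (q : tvec * C) : tvec * C :=
  (LtS i j (fst q), Defs.sigma a0 i j * snd q + Defs.sigma az i j * fst q tR).

Definition dstep (i j : i2) (p : svec * svec) : svec * svec :=
  (Lop gamma phi (RtoC 0) i j (fst p), Lder gamma phi i j (fst p) (snd p)).

Definition Inv (r : nat) (p : svec * svec) (q : tvec * C) : Prop :=
  fst p O = Cpow sp r * fst q tR /\ (forall m, fst p (S m) = 0) /\
  snd p O = (g * Ccos phi * Cpow sp (S r) * snd q + 2 * g * sg * Cpow sp r * fst q tL) / (sp * sp) /\
  (forall m, snd p (S m) = 2 * g * Cpow sp r * fst q (tK m) / sp).

Lemma rwL1 k : phi + g * (RtoC 0 - INR k) = phi - g * INR k.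
Proof. ring. Qed.
Lemma rwL2 k : phi - g * (RtoC 0 - INR k) = phi + g * INR k.
Proof. ring. Qed.
Lemma rwL3 k : 2 * RtoC 0 - INR k = - INR k.
Proof. ring. Qed.
Lemma rwL4 k : RtoC (INR k) + 1 = RtoC (INR (S k)).
Proof. rewrite S_INR, RtoC_plus. reflexivity. Qed.
Lemma rwL5 k : g * (RtoC 0 - INR k) = - (g * INR k).
Proof. ring. Qed.
Lemma INR0 : INR 0 = 0%R.
Proof. reflexivity. Qed.
Lemma rwE1 p : p - g * RtoC 0 = p.
Proof. ring. Qed.
Lemma rwE2 p : p + g * RtoC 0 = p.
Proof. ring. Qed.
Lemma qnum_m0 : qnum gamma (- RtoC 0) = 0.
Proof. unfold qnum. replace (g * - RtoC 0) with (RtoC 0) by ring. rewrite Csin_0. unfold Cdiv. ring. Qed.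
Lemma rwC0 : Ccos (g * - RtoC 0) = 1.
Proof. replace (g * - RtoC 0) with (RtoC 0) by ring. apply Ccos_0. Qed.
Lemma qnum_1 : sg <> 0 -> qnum gamma (RtoC (INR 1)) = 1.
Proof. intros H. unfold qnum. replace (g * RtoC (INR 1)) with g by (simpl; ring). field. auto. Qed.

Lemma inv_step r i j p q : sp <> 0 -> sg <> 0 -> Inv r p q -> Inv (S r) (dstep i j p) (tmstep i j q).
Proof.
  intros Hsp Hsg. destruct p as [v0 dv], q as [T mu]. unfold Inv, dstep, tmstep, LtS, Lop, Lder.
  cbn -[INR Csin Ccos qnum Cpow Ccot]. intros [H1 [H2 [H3 H4]]].
  destruct i, j; cbn -[INR Csin Ccos qnum Cpow Ccot]; (split; [|split; [|split]]).
  all: try (intros m; destruct m); cbn -[INR Csin Ccos qnum Cpow Ccot].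
  all: rewrite ?rwL1, ?rwL2, ?rwL3, ?rwL4, ?rwL5, ?INR0, ?rwE1, ?rwE2, ?qnum_m0, ?(qnum_1 Hsg).
  all: rewrite ?rwC0.
  all: rewrite ?H1, ?H2, ?H3, ?H4, ?Cpow_S.
  all: rewrite <- ?Csin_sub_form, <- ?Csin_add_form.
  all: unfold Ccot.
  all: field; auto.
Qed.
End S.

Open Scope C_scope.

Lemma chain_shift {V : Type} m (A : nat -> V -> V) v :
  chain (S m) A v = A 0%nat (chain m (fun x => A (S x)) v).
Proof.
  revert A v. induction m; intros A v. reflexivity.
  change (chain (S (S m)) A v) with (chain (S m) A (A (S m) v)).
  rewrite IHm. reflexivity.
Qed.

Lemma Cprod_shift m f : Cprod (S m) f = f 0%nat * Cprod m (fun x => f (S x)).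
Proof.
  revert f. induction m; intros f. simpl. ring.
  change (Cprod (S (S m)) f) with (Cprod (S m) f * f (S m)).
  rewrite IHm. simpl. ring.
Qed.

Lemma Csum_shift m f : Csum (S m) f = f 0%nat + Csum m (fun x => f (S x)).
Proof.
  revert f. induction m; intros f. simpl. ring.
  change (Csum (S (S m)) f) with (Csum (S m) f + f (S m)).
  rewrite IHm. simpl. ring.
Qed.

Lemma Cprod_ext m f f' : (forall x, f x = f' x) -> Cprod m f = Cprod m f'.
Proof. intros H. induction m; simpl; [reflexivity|]. rewrite IHm, H. reflexivity. Qed.

Lemma Csum_ext m f f' : (forall x, f x = f' x) -> Csum m f = Csum m f'.
Proof. intros H. induction m; simpl; [reflexivity|]. rewrite IHm, H. reflexivity. Qed.

Lemma Csum_scal m c f : Csum m (fun x => c * f x) = c * Csum m f.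
Proof. induction m; simpl. ring. rewrite IHm. ring. Qed.

Lemma sw_ext m F F' : (forall w, F w = F' w) -> sum_words m F = sum_words m F'.
Proof.
  revert F F'. induction m; intros F F' H; simpl. apply H.
  rewrite (IHm (fun w => F (Defs.a0 :: w)) (fun w => F' (Defs.a0 :: w))),
    (IHm (fun w => F (Defs.ap :: w)) (fun w => F' (Defs.ap :: w))),
    (IHm (fun w => F (Defs.am :: w)) (fun w => F' (Defs.am :: w))),
    (IHm (fun w => F (Defs.az :: w)) (fun w => F' (Defs.az :: w))); auto.
Qed.

Lemma sw_scal m c F : sum_words m (fun w => c * F w) = c * sum_words m F.
Proof.
  revert F. induction m; intros F; simpl. reflexivity.
  rewrite (IHm (fun w => F (Defs.a0 :: w))), (IHm (fun w => F (Defs.ap :: w))),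
    (IHm (fun w => F (Defs.am :: w))), (IHm (fun w => F (Defs.az :: w))). ring.
Qed.

Section S.
Variable gamma : R.
Variable phi : C.

Lemma Ltop_lin a t : exists c t', forall X, Ltop gamma phi a X t = c * X t'.
Proof.
  destruct a, t as [| |m]; try destruct m; simpl;
  match goal with
  | |- exists c t', forall X, ?Y = c * X t' =>
      first [ exists 0, tL; intros X; ring
            | exists 1, tL; intros X; ring
            | exists 1, tR; intros X; ring
            | exists 1, (tK 0); intros X; ring
            | eexists; eexists; intros X; reflexivity ]
  end.
Qed.
End S.

Open Scope C_scope.

Section S.
Variable gamma : R.
Variable phi : C.

Lemma sw_step m (a : alpha) (I' J' : nat -> i2) v t :
  (forall I' J' t, sum_words m (fun w => tchain gamma phi w v t * Cprod m (fun x => Defs.sigma (nth x w Defs.a0) (I' x) (J' x)))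
     = chain m (fun x => LtS gamma phi (I' x) (J' x)) v t) ->
  sum_words m (fun w => tchain gamma phi (a :: w) v t * Cprod (S m) (fun x => Defs.sigma (nth x (a :: w) Defs.a0) (I' x) (J' x)))
  = Defs.sigma a (I' 0%nat) (J' 0%nat) * Ltop gamma phi a (chain m (fun x => LtS gamma phi (I' (S x)) (J' (S x))) v) t.
Proof.
  intros IH. destruct (Ltop_lin gamma phi a t) as [c [t' Hc]].
  rewrite Hc.
  rewrite (sw_ext _ _ (fun w => (Defs.sigma a (I' 0%nat) (J' 0%nat) * c) *
     (tchain gamma phi w v t' * Cprod m (fun x => Defs.sigma (nth x w Defs.a0) (I' (S x)) (J' (S x)))))).
  - rewrite sw_scal, IH. ring.
  - intros w. simpl tchain. rewrite Hc, Cprod_shift. simpl nth. ring.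
Qed.

Lemma Zn_chain m : forall (I' J' : nat -> i2) v t,
  sum_words m (fun w => tchain gamma phi w v t * Cprod m (fun x => Defs.sigma (nth x w Defs.a0) (I' x) (J' x)))
  = chain m (fun x => LtS gamma phi (I' x) (J' x)) v t.
Proof.
  induction m; intros I' J' v t.
  - simpl. ring.
  - change (sum_words (S m) ?F) with (sum_words m (fun w => F (Defs.a0 :: w)) + sum_words m (fun w => F (Defs.ap :: w))
         + sum_words m (fun w => F (Defs.am :: w)) + sum_words m (fun w => F (Defs.az :: w))).
    cbv beta.
    rewrite !sw_step by (intros; apply IHm).
    rewrite chain_shift. unfold LtS at 1. reflexivity.
Qed.

Lemma Mn_chain m : forall (I' J' : nat -> i2),
  fst (chain m (fun x => tmstep gamma phi (I' x) (J' x)) (eR, RtoC 0)) tR = Cprod m (fun y => Defs.sigma Defs.a0 (I' y) (J' y)) /\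
  snd (chain m (fun x => tmstep gamma phi (I' x) (J' x)) (eR, RtoC 0)) =
    Csum m (fun x => Cprod m (fun y => if Nat.eqb y x then Defs.sigma az (I' y) (J' y) else Defs.sigma Defs.a0 (I' y) (J' y))).
Proof.
  induction m; intros I' J'.
  - simpl. split; reflexivity.
  - rewrite chain_shift. destruct (IHm (fun x => I' (S x)) (fun x => J' (S x))) as [E1 E2].
    destruct (chain m (fun x => tmstep gamma phi (I' (S x)) (J' (S x))) (eR, RtoC 0)) as [T mu].
    simpl fst in E1. simpl snd in E2.
    remember (Cprod (S m) _) as P eqn:HP. remember (Csum (S m) _) as Q eqn:HQ.
    unfold tmstep, LtS. cbn [fst snd]. split.
    + subst P. rewrite Cprod_shift, <- E1. cbn [Ltop]. destruct (I' 0%nat), (J' 0%nat). all: simpl. 1-4: ring.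
    + subst Q. rewrite Csum_shift, Cprod_shift. cbn [Nat.eqb].
      rewrite (Csum_ext _ _ (fun x => Defs.sigma Defs.a0 (I' 0%nat) (J' 0%nat) *
         Cprod m (fun y => if Nat.eqb y x then Defs.sigma az (I' (S y)) (J' (S y)) else Defs.sigma Defs.a0 (I' (S y)) (J' (S y))))).
      * rewrite Csum_scal, <- E2, <- E1. destruct (I' 0%nat), (J' 0%nat); simpl; ring.
      * intros x. rewrite Cprod_shift. cbn [Nat.eqb]. reflexivity.
Qed.
End S.

Open Scope C_scope.

Lemma inv_chain gamma phi (I J : nat -> i2) k : Csin phi <> 0 -> Csin (RtoC gamma) <> 0 ->
  forall r p q, Inv gamma phi r p q ->
  Inv gamma phi (k + r) (chain k (fun x => dstep gamma phi (I x) (J x)) p)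
                        (chain k (fun x => tmstep gamma phi (I x) (J x)) q).
Proof.
  intros Hs Hg. induction k; intros r p q H. exact H.
  simpl. replace (S (k + r)) with (k + S r)%nat by (rewrite Nat.add_succ_r; reflexivity).
  apply IHk. apply inv_step; auto.
Qed.

Lemma chain_der gamma phi (I J : nat -> i2) k : forall (V : C -> svec) dV,
  (forall m, isd (fun s => V s m) (RtoC 0) (dV m)) ->
  forall m, isd (fun s => chain k (fun x => Lop gamma phi s (I x) (J x)) (V s) m) (RtoC 0)
     (snd (chain k (fun x => dstep gamma phi (I x) (J x)) (V (RtoC 0), dV)) m).
Proof.
  induction k; intros V dV HV m. exact (HV m).
  simpl. apply (IHk (fun s => Lop gamma phi s (I k) (J k) (V s)) (Lder gamma phi (I k) (J k) (V (RtoC 0)) dV)).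
  intros; apply isd_Lop; auto.
Qed.

Lemma Csin_real x : Csin (RtoC x) = RtoC (sin x).
Proof.
  assert (E1 : Cexp (Ci * RtoC x) = RtoC (cos x) + Ci * RtoC (sin x)).
  { unfold Cexp, Ci, RtoC, Cmult, Cplus. simpl. f_equal.
    - replace (0 * x - 1 * 0)%R with 0%R by ring. replace (0 * 0 + 1 * x)%R with x by ring.
      rewrite exp_0. ring.
    - replace (0 * x - 1 * 0)%R with 0%R by ring. replace (0 * 0 + 1 * x)%R with x by ring.
      rewrite exp_0. ring. }
  assert (E2 : Cexp (- (Ci * RtoC x)) = RtoC (cos x) - Ci * RtoC (sin x)).
  { unfold Cexp, Ci, RtoC, Cminus, Copp, Cmult, Cplus. simpl. f_equal.
    - replace (- (0 * x - 1 * 0))%R with 0%R by ring. replace (- (0 * 0 + 1 * x))%R with (- x)%R by ring.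
      rewrite exp_0, cos_neg. ring.
    - replace (- (0 * x - 1 * 0))%R with 0%R by ring. replace (- (0 * 0 + 1 * x))%R with (- x)%R by ring.
      rewrite exp_0, sin_neg. ring. }
  unfold Csin. rewrite E1, E2. field. apply Ci_neq0.
Qed.

Lemma fst_chain_tm gamma phi (I J : nat -> i2) k : forall q,
  fst (chain k (fun x => tmstep gamma phi (I x) (J x)) q) = chain k (fun x => LtS gamma phi (I x) (J x)) (fst q).
Proof. induction k; intros q. reflexivity. simpl. rewrite IHk. reflexivity. Qed.

Theorem mainTheorem3 (gamma : R) (phi : C) (n : nat)
  (Hg : sin gamma <> 0%R) (Hphi : Csin phi <> RtoC 0) (Hn : (1 <= n)%nat)
  (I J : nat -> i2) :
  is_derive (K := C_AbsRing) (V := C_NormedModule)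
    (fun s : C => / Cpow (Csin phi) n * Wn gamma n phi s I J) (RtoC 0)
    (2 * RtoC gamma * Csin (RtoC gamma) / Cpow (Csin phi) 2 * Zn gamma n phi I J
     + RtoC gamma * Ccot phi * Mn n I J).
Proof.
  assert (Hsg : Csin (RtoC gamma) <> 0).
  { rewrite Csin_real. intro H. apply Hg. injection H. auto. }
  set (D := snd (chain n (fun x => dstep gamma phi (I x) (J x)) (e0, fun _ => RtoC 0)) O).
  assert (HW : isd (fun s => Wn gamma n phi s I J) (RtoC 0) D).
  { unfold Wn, D. apply (chain_der gamma phi I J n (fun _ => e0) (fun _ => RtoC 0)).
    intros; apply isd_const. }
  assert (H0 : Inv gamma phi 0 (e0, fun _ => RtoC 0) (eR, RtoC 0)).
  { unfold Inv. simpl. split; [ring|split; [reflexivity|split]].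
    - unfold Cdiv. ring.
    - intros m. unfold Cdiv. ring. }
  pose proof (inv_chain gamma phi I J n Hphi Hsg 0 _ _ H0) as HI.
  rewrite Nat.add_0_r in HI. destruct HI as [_ [_ [H3 _]]].
  fold D in H3.
  rewrite fst_chain_tm in H3.
  destruct (Mn_chain gamma phi n I J) as [_ HM].
  rewrite HM in H3.
  change (fst (eR, RtoC 0)) with eR in H3.   rewrite <- (Zn_chain gamma phi n I J eR tL) in H3.
  fold (Zn gamma n phi I J) in H3. fold (Mn n I J) in H3.
  eapply isd_eq. apply isd_mult. apply isd_const. exact HW.
  rewrite H3. unfold Ccot. rewrite Cpow_S. simpl (Cpow (Csin phi) 2).
  field. split; auto. apply Cpow_nz. auto.
Qed.
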